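(* Under Assumptions A1–A3 (with constant $p$), the valuation operator $V$ is irreducible on $L_p(\pi)$: the only closed ideals $J\subset L_p(\pi)$ with $V(J)\subset J$ are $\{0\}$ and $L_p(\pi)$.
   Context: Standing setting: $\{X_t\}_{t\ge0}$ is a stationary Markov process on a separable completely metrizable space $\mathsf X$ with transition kernel $\Pi$, $n$-step kernel $\Pi^n$, and stationary law $\pi$; $\{\eta_t\}$ iid with law $\nu$ on $\mathsf W$, independent of $\{X_t\}$; $\phi,g\ge0$ Borel on $\mathsf X\times\mathsf X\times\mathsf W$ with $\Phi_{t+1}=\phi(X_t,X_{t+1},\eta_{t+1})$, $G_{t+1}=g(X_t,X_{t+1},\eta_{t+1})$. $L_p(\pi)$ is the Banach lattice of $p$-integrable functions modulo $\pi$-null sets with $\pi$-a.e. order; $\mathcal H_p$ its nonnegative elements. An ideal is a vector subspace $J$ such that $f\in J$ whenever $|f|\le|h|$ for some $h\in J$. Valuation operator $Vh(x)=\int h(y)[\int\phi(x,y,\eta)\nu(d\eta)]\Pi(x,dy)$; $\hat g(x)=\int\int\phi g\,d\nu\,\Pi(x,dy)$. A1: $\phi>0$ everywhere and $G_t>0$ with positive probability. A2: for all Borel $B$ with $\pi(B)>0$ and all $x$, $\Pi^n(x,B)>0$ for some $n$. A3: for some $p\ge1$, $\hat g\in\mathcal H_p$ and $V$ maps $L_p(\pi)$ into itself with some power $V^i$ compact. *)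

(* Defs.v *)
From HB Require Import structures.
From mathcomp Require Import all_boot all_order all_algebra.
From mathcomp Require Import all_classical all_reals all_analysis.
Set Implicit Arguments.
Unset Strict Implicit.
Unset Printing Implicit Defensive.
Import Order.TTheory GRing.Theory Num.Theory.
Import numFieldNormedType.Exports.
Local Open Scope classical_set_scope.
Local Open Scope ring_scope.

Section polish.
Context {R : realType} {T : Type}.

Definition is_metric (dist : T -> T -> R) : Prop :=
  (forall x y, 0 <= dist x y) /\ (forall x y, dist x y = 0 <-> x = y) /\
  (forall x y, dist x y = dist y x) /\
  (forall x y z, dist x z <= dist x y + dist y z).

Definition metric_open (dist : T -> T -> R) (U : set T) : Prop :=
  forall x, U x -> exists2 r : R, 0 < r & forall y, dist x y < r -> U y.

Definition metric_complete (dist : T -> T -> R) : Prop :=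
  forall u : nat -> T,
    (forall e : R, 0 < e -> exists N, forall m n, (N <= m)%N -> (N <= n)%N ->
        dist (u m) (u n) < e) ->
    exists l, forall e : R, 0 < e -> exists N, forall n, (N <= n)%N -> dist (u n) l < e.

Definition metric_separable (dist : T -> T -> R) : Prop :=
  exists u : nat -> T, forall x (e : R), 0 < e -> exists n, dist x (u n) < e.
End polish.

Definition polish_borel (R : realType) d (X : measurableType d) : Prop :=
  exists dist : X -> X -> R,
    [/\ is_metric dist, metric_complete dist, metric_separable dist &
        @measurable d X = <<s metric_open dist >>].

Section valuation.
Context {R : realType} {dX dW : measure_display}
  {X : measurableType dX} {W : measurableType dW}.
Local Open Scope ereal_scope.

Fixpoint kiter (Pi : R.-pker X ~> X) (n : nat) (x : X) (B : set X) : \bar R :=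
  match n with
  | 0%N => (\1_B x)%:E
  | n'.+1 => \int[Pi x]_y kiter Pi n' y B
  end.

Definition phibar (nu : probability W R) (phi : X * X * W -> R) (x y : X) : \bar R :=
  \int[nu]_e (phi (x, y, e))%:E.

Definition Vop (Pi : R.-pker X ~> X) (nu : probability W R) (phi : X * X * W -> R)
  (h : X -> R) : X -> R :=
  fun x => fine (\int[Pi x]_y ((h y)%:E * phibar nu phi x y)).

Definition ghat (Pi : R.-pker X ~> X) (nu : probability W R) (phi g : X * X * W -> R)
  : X -> \bar R :=
  fun x => \int[Pi x]_y \int[nu]_e (phi (x, y, e) * g (x, y, e))%:E.

Definition inLp (pi : probability X R) (p : R) (f : X -> R) : Prop :=
  f \in Lfun pi p%:E.

Definition inHp (pi : probability X R) (p : R) (f : X -> \bar R) : Prop :=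
  (forall x, 0 <= f x) /\ {ae pi, forall x, f x < +oo} /\ inLp pi p (fine \o f).

(* compactness of an operator on L_p(pi): image of the unit ball is relatively
   compact, i.e. every bounded sequence has a subsequence whose image converges in L_p *)
Definition Lp_compact (pi : probability X R) (p : R) (T : (X -> R) -> (X -> R)) : Prop :=
  forall u : nat -> X -> R,
    (forall n, inLp pi p (u n) /\ 'N[pi]_p%:E [EFin \o u n] <= 1) ->
    exists (s : nat -> nat) (f : X -> R),
      [/\ {homo s : m n / (m < n)%N >-> (m < n)%N}, inLp pi p f &
          (fun n => 'N[pi]_p%:E [EFin \o (fun x => T (u (s n)) x - f x)%R]) @ \oo --> 0].

(* closed ideal of L_p(pi), represented as a set of representatives (saturated
   under pi-a.e. equality via solidity) *)
Definition Lp_closed_ideal (pi : probability X R) (p : R) (J : set (X -> R)) : Prop :=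
  J `<=` inLp pi p /\
  J (fun=> 0%R) /\
  (forall f h, J f -> J h -> J (fun x => f x + h x)%R) /\
  (forall (a : R) f, J f -> J (fun x => a * f x)%R) /\
  (forall f h, J h -> inLp pi p f -> {ae pi, forall x, (`|f x| <= `|h x|)%R} -> J f) /\
  (forall (u : nat -> X -> R) f, (forall n, J (u n)) -> inLp pi p f ->
     (fun n => 'N[pi]_p%:E [EFin \o (fun x => u n x - f x)%R]) @ \oo --> 0 -> J f).

End valuation.

(* Main.v *)
Require Import Defs.
From HB Require Import structures.
From mathcomp Require Import all_boot all_order all_algebra.
From mathcomp Require Import all_classical all_reals all_analysis.
From mathcomp Require Import measurable_realfun.
From mathcomp Require Import lra.
Import Order.TTheory GRing.Theory Num.Theory.
Import numFieldNormedType.Exports.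
Local Open Scope classical_set_scope.
Local Open Scope ring_scope.

Lemma powR_seq_cvg0 (R : realType) (u : nat -> R) (r : R) : 0 < r ->
  (forall n, 0 <= u n) -> u @ \oo --> 0 -> (fun n => u n `^ r) @ \oo --> 0.
Proof.
move=> r0 u0 /cvgr0Pnorm_lt cu; apply/cvgr0Pnorm_lt => e e0.
have e1 : 0 < e `^ r^-1 by rewrite powR_gt0.
move: (cu _ e1); apply: filterS => n.
move=> h; rewrite ger0_norm; last exact: powR_ge0.
move: h; rewrite ger0_norm // => h.
have := gt0_ltr_powR r0 _ _ h.
rewrite -powRrM mulVf ?gt_eqF // powRr1 ?(ltW e0) //; apply; rewrite nnegrE//.
exact: ltW.
Qed.

Section Lp.
Context (R : realType) (d : measure_display) (X : measurableType d)
  (pi : probability X R) (p : R) (p1 : 1 <= p).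

Let p0 : 0 < p. Proof. exact: lt_le_trans ltr01 p1. Qed.

Lemma LnormE (f : X -> R) :
  ('N[pi]_p%:E [EFin \o f] = (\int[pi]_x (`|f x| `^ p)%:E) `^ p^-1)%E.
Proof.
rewrite unlock /=; by congr poweR; apply: eq_integral => x _ /=.
Qed.

Lemma inLpP (f : X -> R) : inLp pi p f <->
  measurable_fun setT f /\ ('N[pi]_p%:E [EFin \o f] < +oo)%E.
Proof.
rewrite /inLp inE; split => [/andP[]|[]].
  by rewrite !inE.
by move=> mf nf; apply/andP; split; rewrite inE.
Qed.

Lemma mpow (f : X -> R) : measurable_fun setT f ->
  measurable_fun setT (fun x => (`|f x| `^ p)%:E : \bar R).
Proof.
move=> mf; apply/measurable_EFinP.
apply: (measurableT_comp (measurable_powR _)); exact: measurableT_comp.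
Qed.

Lemma Lnorm_le (f g : X -> R) : measurable_fun setT f -> measurable_fun setT g ->
  (forall x, `|f x| <= `|g x|) ->
  ('N[pi]_p%:E [EFin \o f] <= 'N[pi]_p%:E [EFin \o g])%E.
Proof.
move=> mf mg fg; rewrite !LnormE.
apply: gt0_ler_poweR; first by rewrite invr_ge0 ltW.
- by rewrite in_itv/= leey andbT integral_ge0// => x _; rewrite lee_fin powR_ge0.
- by rewrite in_itv/= leey andbT integral_ge0// => x _; rewrite lee_fin powR_ge0.
apply: ge0_le_integral => //.
- exact: mpow mf.
- exact: mpow mg.
move=> x _; rewrite lee_fin; apply: ge0_ler_powR; rewrite ?nnegrE//.
exact: ltW.
Qed.

Lemma inLp_dom (f g : X -> R) : measurable_fun setT f -> inLp pi p g ->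
  (forall x, `|f x| <= `|g x|) -> inLp pi p f.
Proof.
move=> mf /inLpP[mg ng] fg; apply/inLpP; split => //.
apply: le_lt_trans ng; exact: Lnorm_le.
Qed.

Lemma inLp_bnd (f : X -> R) (c : R) : measurable_fun setT f ->
  (forall x, `|f x| <= c) -> inLp pi p f.
Proof.
move=> mf fc; apply: (@inLp_dom f (cst c)) => //; first exact: Lfun_cst.
by move=> x; rewrite (le_trans (fc x))// ler_norm.
Qed.

Lemma Lp_cvg0 (g_ : nat -> X -> R) (G : X -> R) :
  (forall n, measurable_fun setT (g_ n)) -> (forall x, g_ ^~ x @ \oo --> 0) ->
  inLp pi p G -> (forall n x, `|g_ n x| <= `|G x|) ->
  ('N[pi]_p%:E [EFin \o g_ n])%E @[n --> \oo] --> 0%E.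
Proof.
move=> mg cg LG gG.
have [mG _] := (inLpP G).1 LG.
have iG := Lfun_integrable p1 LG.
pose I n := (\int[pi]_x (`|g_ n x| `^ p)%:E)%E.
have I0 : I n @[n --> \oo] --> 0%E.
  have := @dominated_cvg _ _ _ pi setT measurableT
    (fun n x => (`|g_ n x| `^ p)%:E) (cst 0%E) (fun x => (`|G x| `^ p)%:E).
  rewrite integral0; apply => //.
  - by move=> n; exact: mpow.
  - move=> x _; apply: cvg_EFin; first exact: nearW.
    apply: (@powR_seq_cvg0 R (fun n => `|g_ n x|)) => //.
    have h := cvg_norm (cg x); rewrite normr0 in h; exact: h.
  - move=> n x _; rewrite gee0_abs ?lee_fin ?powR_ge0 //.
    by apply: ge0_ler_powR; rewrite ?nnegrE// ltW.
have Ifin n : (I n \is a fin_num)%E.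
  rewrite ge0_fin_numE; last by apply: integral_ge0 => x _; rewrite lee_fin powR_ge0.
  apply: le_lt_trans (_ : (\int[pi]_x (`|G x| `^ p)%:E < +oo)%E).
    apply: ge0_le_integral => //.
    - exact: mpow (mg n).
    - exact: mpow mG.
    by move=> x _; rewrite lee_fin; apply: ge0_ler_powR; rewrite ?nnegrE// ltW.
  move/integrableP : iG => [_]; apply: le_lt_trans.
  apply: ge0_le_integral => //.
  - exact: mpow mG.
  - apply: measurableT_comp => //; exact: mpow mG.
  - by move=> x _; rewrite gee0_abs// lee_fin powR_ge0.
have NE n : ('N[pi]_p%:E [EFin \o g_ n] = ((fine (I n)) `^ p^-1)%:E)%E.
  by rewrite LnormE -/(I n) -(fineK (Ifin n)) poweR_EFin.
under eq_cvg do rewrite NE.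
apply: cvg_EFin; first exact: nearW.
apply: (@powR_seq_cvg0 R (fun n => fine (I n))); first by rewrite invr_gt0.
  by move=> n; apply: fine_ge0; apply: integral_ge0 => x _; rewrite lee_fin powR_ge0.
exact: fine_cvg.
Qed.

End Lp.


Lemma cvg_ev0 (R : realType) (u : nat -> R) (k : nat) :
  (forall n, (k <= n)%N -> u n = 0) -> u @ \oo --> 0.
Proof.
move=> uk; apply/cvgr0Pnorm_lt => e e0; exists k => // n /= kn.
by rewrite uk// normr0.
Qed.

Fixpoint aseq (T : Type) (B : nat -> set T) (n : nat) : set T :=
  if n is n1.+1 then aseq T B n1 `|` B n else B 0%N.
Arguments aseq {T} B n.

Lemma aseq_mono (T : Type) (B : nat -> set T) (n m : nat) : (n <= m)%N ->
  aseq B n `<=` aseq B m.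
Proof.
elim: m => [|m IH]; first by rewrite leqn0 => /eqP ->.
rewrite leq_eqVlt => /orP[/eqP -> //|]; rewrite ltnS => /IH nm x /nm ax.
by left.
Qed.

Lemma aseq_sub (T : Type) (B : nat -> set T) (n : nat) : B n `<=` aseq B n.
Proof. by case: n => [//|n] x bx; right. Qed.

Arguments aseq_mono {T B n m}.
Arguments aseq_sub {T B n}.

Section Main.
Context (R : realType) (d : measure_display) (X : measurableType d)
  (pi : probability X R) (p : R) (p1 : 1 <= p) (J : set (X -> R))
  (HJ : Lp_closed_ideal pi p J).

Let JLp : J `<=` inLp pi p. Proof. by case: HJ. Qed.
Let JD f h : J f -> J h -> J (fun x => f x + h x). Proof. by case: HJ => _ [_ [H _]]; apply: H. Qed.
Let JZ a f : J f -> J (fun x => a * f x). Proof. by case: HJ => _ [_ [_ [H _]]]; apply: H. Qed.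
Let Jsol f h : J h -> inLp pi p f -> {ae pi, forall x, `|f x| <= `|h x|} -> J f.
Proof. by case: HJ => _ [_ [_ [_ [h' _]]]]; apply: h'. Qed.
Let Jcl (u : nat -> X -> R) f : (forall n, J (u n)) -> inLp pi p f ->
  (fun n => 'N[pi]_p%:E [EFin \o (fun x => (u n x - f x)%R)])%E @ \oo --> 0%E -> J f.
Proof. by case: HJ => _ [_ [_ [_ [_ H]]]]; apply: H. Qed.

Definition Sset (A : set X) := measurable A /\ J (\1_A).

Lemma ind_Lp A : measurable A -> inLp pi p (\1_A).
Proof.
move=> mA; apply: (@inLp_bnd R d X pi p p1 _ 1) => //.
by move=> x; rewrite indicE; case: (_ \in _); rewrite ?normr1 ?normr0.
Qed.

Lemma mEk (f : X -> R) (c : R) : measurable_fun setT f ->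
  measurable [set x | c < `|f x|].
Proof.
move=> mf.
have -> : [set x | c < `|f x|] = (fun x => `|f x|) @^-1` `]c, +oo[.
  by apply/seteqP; split => x /=; rewrite in_itv/= andbT.
rewrite -[X in measurable X]setTI; apply: (measurableT_comp (@normr_measurable R _) mf) => //.
Qed.

Lemma S_of_J (f : X -> R) (k : nat) : J f -> Sset [set x | k.+1%:R^-1 < `|f x|].
Proof.
move=> Jf; have [mf _] := (@inLpP R d X pi p f).1 (JLp _ Jf).
have mE := @mEk f k.+1%:R^-1 mf.
split => //; apply: (@Jsol _ (fun x => k.+1%:R * f x)); first exact: JZ.
  exact: ind_Lp.
apply: aeW => x; rewrite indicE; case: (boolP (x \in _)) => [|_]; last first.
  by rewrite normr0.
rewrite inE /= => h; rewrite normr1 normrM ger0_norm//.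
by rewrite -ler_pdivrMl// mulr1; apply: ltW.
Qed.

Lemma S_U A B : Sset A -> Sset B -> Sset (A `|` B).
Proof.
move=> [mA JA] [mB JB]; split; first exact: measurableU.
apply: (@Jsol _ _ (JD _ _ JA JB)); first exact/ind_Lp/measurableU.
apply: aeW => x; rewrite !indicE in_setU.
by case: (x \in A); case: (x \in B); rewrite /= ?normr1 ?normr0 ?add0r ?addr0 ?normr1//;
  rewrite ger0_norm ?addr_ge0 ?ler01//; lra.
Qed.

Lemma ae0_of (f : X -> R) (D : set X) : measurable_fun setT f -> measurable D ->
  (forall k : nat, pi ([set x | k.+1%:R^-1 < `|f x|] `&` D) = 0%E) ->
  {ae pi, forall x, D x -> f x = 0}.
Proof.
move=> mf mD h.
apply: (@negligibleS _ _ _ pi (\bigcup_k ([set x | k.+1%:R^-1 < `|f x|] `&` D))).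
  move=> x /= /not_implyP [Dx fx0]; exists (Num.trunc (`|f x|^-1)) => //.
  have fpos : 0 < `|f x| by rewrite normr_gt0; exact/eqP.
  split => //=; rewrite invf_plt ?posrE ?ltr0n//.
  exact: truncnS_gt.
apply: (@negligible_bigcup _ _ _ pi (fun k => [set x | k.+1%:R^-1 < `|f x|] `&` D)) => k; exists ([set x | k.+1%:R^-1 < `|f x|] `&` D).
split => //; [exact: (measurableI _ _ (@mEk f _ mf) mD) | exact: h].
Qed.

Lemma max_set : exists A, Sset A /\ (forall B, Sset B -> pi (B `\` A) = 0%E).
Proof.
have J0 : J (fun=> 0) by case: HJ => _ [H _].
pose s := ereal_sup [set pi B | B in Sset].
have s1 : (s <= 1)%E.
  by apply: ge_ereal_sup => _ [B [mB _] <-]; exact: probability_le1.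
have s0 : (0 <= s)%E.
  have S0 : Sset set0 by split => //; rewrite indic0.
  by rewrite -(measure0 pi); apply: ereal_sup_ubound; exists set0.
have sfin : s \is a fin_num by rewrite ge0_fin_numE// (le_lt_trans s1)// ltey.
have hB : forall n, exists B, Sset B /\ (s - (n.+1%:R^-1)%:E < pi B)%E.
  move=> n; have : (s - (n.+1%:R^-1)%:E < s)%E.
    rewrite -(fineK sfin) -EFinB lte_fin ltrBlDr ltrDl invr_gt0 ltr0n//.
  by move/ereal_sup_gt => [_ [B SB <-] lt]; exists B.
move/choice: hB => [B HB].
have SA n : Sset (aseq B n).
  elim: n => [|n IH]; first by case: (HB 0%N).
  by apply: S_U => //; case: (HB n.+1).
pose A := \bigcup_n aseq B n.
have mA : measurable A by apply: bigcupT_measurable => n; case: (SA n).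
have JA : J (\1_A).
  apply: (@Jcl (fun n => \1_(aseq B n))); first by move=> n; case: (SA n).
    exact: ind_Lp.
  apply: (@Lp_cvg0 R d X pi p p1 _ (cst 1)).
  - move=> n; apply: measurable_funB; apply: measurable_indic => //.
    by case: (SA n).
  - move=> x; case: (pselect (A x)) => [[k _ xk]|nAx].
      apply: (@cvg_ev0 R _ k) => n kn.
      by rewrite !indicE !mem_set//; [rewrite subrr | exists k | exact: (aseq_mono kn _ xk)].
    apply: (@cvg_ev0 R _ 0%N) => n _.
    rewrite !indicE !memNset ?subrr// => xn; apply: nAx; exists n => //.
  - exact: Lfun_cst.
  - move=> n x; rewrite !indicE normr1.
    by case: (_ \in _); case: (_ \in _); rewrite ?subrr ?subr0 ?sub0r ?normrN ?normr0 ?normr1.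
exists A; split => // B' [mB' JB'].
have SU : Sset (A `|` B') by apply: S_U.
have mBA : measurable (B' `\` A) by apply: measurableD.
have mU : measurable (A `|` B') by apply: measurableU.
have Us : (pi (A `|` B') <= s)%E by apply: ereal_sup_ubound; exists (A `|` B').
have UE : pi (A `|` B') = (pi (B' `\` A) + pi A)%E.
  rewrite (measureDI pi mU mA); congr (pi _ + pi _)%E.
    by apply/seteqP; split => x /= [];[case => // ? ? ; split|move=> ? ?; split => //; right].
  by apply/seteqP; split => x /=; [case|move=> ?; split => //; left].
have Bn n : (s - (n.+1%:R^-1)%:E < pi A)%E.
  case: (HB n) => [[mBn _] lt]; apply: (lt_le_trans lt).
  by apply: le_measure; rewrite ?inE// => x Bx; exists n => //; exact: aseq_sub.
apply/eqP; rewrite eq_le measure_ge0 andbT; apply/lee_addgt0Pr => e e0.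
pose n := Num.trunc e^-1.
have ne : n.+1%:R^-1 < e.
  by rewrite invf_plt ?posrE ?ltr0n//; exact: truncnS_gt.
have := Bn n; move: Us; rewrite UE.
rewrite -(fineK sfin) -(fineK (fin_num_measure pi _ mBA)) -(fineK (fin_num_measure pi _ mA)).
rewrite -EFinD -EFinB add0e !lee_fin !lte_fin => h1 h2.
have h3 : fine (pi (B' `\` A)) <= fine s - fine (pi A) by rewrite lerBrDr.
have h4 : fine s - fine (pi A) < n.+1%:R^-1 by move: h2; rewrite ltrBlDr ltrBlDl addrC.
exact: (ltW (lt_trans (le_lt_trans h3 h4) ne)).
Qed.

Lemma ae_out A : (forall B, Sset B -> pi (B `\` A) = 0%E) -> measurable A ->
  forall f, J f -> {ae pi, forall x, ~ A x -> f x = 0}.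
Proof.
move=> maxA mA f Jf; have [mf _] := (@inLpP R d X pi p f).1 (JLp _ Jf).
have := @ae0_of f (~` A) mf (measurableC mA).
by rewrite /=; apply => k; rewrite -setDE; apply: maxA; apply: S_of_J.
Qed.

Lemma S_pos : (exists h, J h /\ ~ {ae pi, forall x, h x = 0}) ->
  exists A0, Sset A0 /\ (0 < pi A0)%E.
Proof.
move=> [h [Jh nh]]; have [mh _] := (@inLpP R d X pi p h).1 (JLp _ Jh).
case: (pselect (exists k, pi ([set x | k.+1%:R^-1 < `|h x|] `&` setT) != 0%E)).
  move=> [k Ek]; exists [set x | k.+1%:R^-1 < `|h x|]; split; first exact: S_of_J.
  by rewrite lt0e measure_ge0 andbT; move: Ek; rewrite setIT.
move=> H; exfalso; apply: nh.
have := @ae0_of h setT mh measurableT.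
have H' : forall k : nat, pi ([set x | k.+1%:R^-1 < `|h x|] `&` setT) = 0%E.
  by move=> k; apply: contrapT => hk; apply: H; exists k; exact/eqP.
by move=> /(_ H'); apply: filterS => x /(_ I).
Qed.

Lemma mLe (f : X -> R) (c : R) : measurable_fun setT f ->
  measurable [set x | `|f x| <= c].
Proof.
move=> mf.
have -> : [set x | `|f x| <= c] = (fun x => `|f x|) @^-1` `]-oo, c].
  by apply/seteqP; split => x /=; rewrite in_itv/=.
rewrite -[X in measurable X]setTI; apply: (measurableT_comp (@normr_measurable R _) mf) => //.
Qed.

Lemma full_of_null A : Sset A -> pi (~` A) = 0%E -> forall f, inLp pi p f -> J f.
Proof.
move=> [mA JA] Ac0 f Lf; have [mf _] := (@inLpP R d X pi p f).1 Lf.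
pose fn n x := f x * \1_[set y | `|f y| <= n%:R] x.
have mfn n : measurable_fun setT (fn n).
  by apply: measurable_funM => //; apply: measurable_indic; exact: mLe.
have fnb n x : `|fn n x| <= n%:R.
  rewrite /fn indicE normrM; case: (boolP (x \in _)) => [|_].
    by rewrite inE /= normr1 mulr1.
  by rewrite normr0 mulr0.
have aeA : {ae pi, forall x, A x}.
  by exists (~` A); split => //; exact: measurableC.
apply: (@Jcl fn).
- move=> n; apply: (@Jsol _ (fun x => n%:R * \1_A x)); first exact: JZ.
    exact: (@inLp_bnd R d X pi p p1 _ n%:R).
  apply: filterS aeA => x Ax; rewrite indicE mem_set//= mulr1n mulr1.
  rewrite [X in _ <= X]ger0_norm//; exact: fnb.
- exact: Lf.
apply: (@Lp_cvg0 R d X pi p p1 _ f).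
- by move=> n; apply: measurable_funB.
- move=> x; apply: (@cvg_ev0 R _ (Num.trunc `|f x|).+1) => n kn.
  rewrite /fn indicE mem_set ?mulr1 ?subrr//=.
  apply: ltW; apply: (lt_le_trans (truncnS_gt _)); rewrite ler_nat.
  exact: kn.
- exact: Lf.
- move=> n x; rewrite /fn indicE; case: (_ \in _).
    by rewrite mulr1 subrr normr0.
  by rewrite mulr0 sub0r normrN.
Qed.

End Main.


Section Kern.
Context (R : realType) (dX dW : measure_display)
  (X : measurableType dX) (W : measurableType dW)
  (Pi : R.-pker X ~> X) (pi : probability X R) (nu : probability W R)
  (phi : X * X * W -> R).
Hypothesis stat : forall B, measurable B -> pi B = (\int[pi]_x Pi x B)%E.
Hypothesis mphi : measurable_fun setT phi.
Hypothesis phipos : forall z, 0 < phi z.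

Lemma phibar_gt0 x y : (0 < phibar nu phi x y)%E.
Proof.
have mf : measurable_fun setT (fun e => (phi (x, y, e))%:E : \bar R).
  by apply/measurable_EFinP; exact: (measurable_fun_pair2 (x, y) mphi).
have ge0 : (0 <= phibar nu phi x y)%E.
  by apply: integral_ge0 => e _; rewrite lee_fin ltW.
rewrite lt0e ge0 andbT; apply/negP => /eqP h.
have : (\int[nu]_e `|(phi (x, y, e))%:E| = 0)%E.
  rewrite -h /phibar; apply: eq_integral => e _.
  by rewrite gee0_abs// lee_fin ltW.
move/(ae_eq_integral_abs nu measurableT mf) => [N [mN N0 sub]].
have : (nu setT <= nu N)%E.
  apply: le_measure; rewrite ?inE// => e _; apply: sub => /= /(_ I) /eqP.
  by rewrite eqe gt_eqF.
by rewrite probability_setT N0 lee_fin ler10.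
Qed.

Lemma kiter_ge0 n x B : (0 <= kiter Pi n x B)%E.
Proof.
case: n => [|n] /=; first by rewrite lee_fin indicE ler0n.
apply: integral_ge0 => y _; elim: n y => [|n IH] y /=.
  by rewrite lee_fin indicE ler0n.
by apply: integral_ge0 => z _; apply: IH.
Qed.

Lemma kiter_meas n B : measurable B ->
  measurable_fun setT (fun x => kiter Pi n x B).
Proof.
move=> mB; elim: n => [|n IH] /=.
  by apply/measurable_EFinP; exact: measurable_indic.
apply: (@measurable_fun_integral_kernel _ _ _ _ _ Pi) => //.
- by move=> U mU; exact: measurable_kernel.
- by move=> z; exact: kiter_ge0.
Qed.

Lemma null_Pi N : measurable N -> pi N = 0%E -> {ae pi, forall x, Pi x N = 0%E}.
Proof.
move=> mN N0.
have : (\int[pi]_x `|Pi x N| = 0)%E.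
  rewrite -N0 stat//; apply: eq_integral => x _; rewrite gee0_abs//.
move/(ae_eq_integral_abs pi measurableT (measurable_kernel Pi N mN)).
by apply: filterS => x /(_ I).
Qed.

Lemma kiter_zero A : measurable A ->
  {ae pi, forall x, ~ A x -> Pi x A = 0%E} ->
  forall n, {ae pi, forall x, ~ A x -> kiter Pi n x A = 0%E}.
Proof.
move=> mA good; elim => [|n IH].
  by apply: aeW => x nAx /=; rewrite indicE memNset.
have [N [mN N0 sub]] := IH.
apply: (filterS2 _ _ (null_Pi _ mN N0) good) => x h1 h2 nAx /=.
rewrite (ae_eq_integral (cst 0%E)) ?integral0//.
- exact: kiter_meas.
- apply: (@negligibleS _ _ _ (Pi x) (A `|` N)).
    move=> y /= /not_implyP [_ ky]; case: (pselect (A y)) => Ay; [by left|right].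
    by apply: sub => /= h; apply: ky; exact: h Ay.
  by apply: negligibleU; [exists A; split => //; exact: h2 nAx|exists N; split]...
Qed.

Lemma closed_null A : measurable A -> (0 < pi A)%E ->
  (forall B, measurable B -> (0 < pi B)%E ->
     forall x, exists n, (0 < kiter Pi n x B)%E) ->
  {ae pi, forall x, ~ A x -> Pi x A = 0%E} -> pi (~` A) = 0%E.
Proof.
move=> mA Apos A2 good.
have := ae_foralln (kiter_zero _ mA good) => -[N [mN N0 sub]].
apply/eqP; rewrite eq_le measure_ge0 andbT -N0.
apply: le_measure; rewrite ?inE//; first exact: measurableC.
move=> x nAx; apply: sub => /= H.
have [n hn] := A2 A mA Apos x.
by move: hn; rewrite (H n nAx) ltxx.
Qed.

Lemma good_of_V A : measurable A ->
  {ae pi, forall x, ~ A x -> Vop Pi nu phi (\1_A) x = 0} ->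
  {ae pi, forall x, (Pi x).-integrable setT
     (fun y => ((\1_A y)%:E * phibar nu phi x y)%E)} ->
  {ae pi, forall x, ~ A x -> Pi x A = 0%E}.
Proof.
move=> mA hV hI; apply: (filterS2 _ _ hV hI) => x h1 h2 nAx.
have := h1 nAx; rewrite /Vop => hV0.
have fin := integrable_fin_num measurableT h2.
have I0 : (\int[Pi x]_y ((\1_A y)%:E * phibar nu phi x y) = 0)%E.
  by rewrite -(fineK fin) hV0.
have F0 y : (0 <= (\1_A y)%:E * phibar nu phi x y)%E.
  by rewrite mule_ge0 ?lee_fin ?indicE ?ler0n// ltW// phibar_gt0.
have mF : measurable_fun setT (fun y => ((\1_A y)%:E * phibar nu phi x y)%E).
  by case/integrableP : h2.
have : (\int[Pi x]_y `|(\1_A y)%:E * phibar nu phi x y| = 0)%E.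
  by rewrite -I0; apply: eq_integral => y _; rewrite gee0_abs.
move/(ae_eq_integral_abs (Pi x) measurableT mF) => [N [mN N0 sub]].
apply/eqP; rewrite eq_le measure_ge0 andbT -N0.
apply: le_measure; rewrite ?inE// => y Ay; apply: sub => /= /(_ I).
by rewrite indicE mem_set// mul1e => /eqP; rewrite gt_eqF// phibar_gt0.
Qed.

End Kern.


Theorem mainTheorem9 (R : realType) (dX dW : measure_display)
  (X : measurableType dX) (W : measurableType dW)
  (Pi : R.-pker X ~> X) (pi : probability X R) (nu : probability W R)
  (phi g : X * X * W -> R) (p : R) :
  (* standing setting *)
  polish_borel R X ->
  (forall B, measurable B -> pi B = (\int[pi]_x Pi x B)%E) ->
  measurable_fun setT phi -> measurable_fun setT g ->
  (forall z, 0 <= phi z) -> (forall z, 0 <= g z) ->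
  (* A1 *)
  (forall z, 0 < phi z) ->
  (0 < \int[pi]_x \int[Pi x]_y nu [set e | (0 < g (x, y, e))%R])%E ->
  (* A2 *)
  (forall B, measurable B -> (0 < pi B)%E ->
     forall x, exists n, (0 < kiter Pi n x B)%E) ->
  (* A3 *)
  1 <= p ->
  inHp pi p (ghat Pi nu phi g) ->
  (forall h, inLp pi p h ->
     {ae pi, forall x, (Pi x).-integrable setT (fun y => ((h y)%:E * phibar nu phi x y)%E)}
     /\ inLp pi p (Vop Pi nu phi h)) ->
  (exists i : nat, Lp_compact pi p (iter i (Vop Pi nu phi))) ->
  (* conclusion: V is irreducible *)
  forall J : set (X -> R),
    Lp_closed_ideal pi p J ->
    (forall h, J h -> J (Vop Pi nu phi h)) ->
    (forall h, J h -> {ae pi, forall x, h x = 0}) \/ (forall h, inLp pi p h -> J h).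
Proof.
move=> _ stat mphi _ _ _ phipos _ A2 p1 _ Vhyp _ J HJ JV.
case: (pselect (forall h, J h -> {ae pi, forall x, h x = 0})) => [|nz]; [by left|right].
have : exists h, J h /\ ~ {ae pi, forall x, h x = 0}.
  by apply: contrapT => H; apply: nz => h Jh; apply: contrapT => nh; apply: H; exists h.
move/(@S_pos R dX X pi p p1 J HJ) => [A0 [SA0 A0pos]].
have [A [[mA JA] maxA]] := @max_set R dX X pi p p1 J HJ.
have Apos : (0 < pi A)%E.
  apply: (lt_le_trans A0pos); have [mA0 _] := SA0.
  rewrite (measureDI pi mA0 mA) [X in (X + _)%E](_ : _ = 0%E) ?add0e; last exact: maxA.
  apply: le_measure; [rewrite inE; exact: measurableI | rewrite inE; exact: mA | by move=> x [_ ?]].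

have hV := @ae_out R dX X pi p p1 J HJ A maxA mA _ (JV _ JA).
have hI := (Vhyp _ (@ind_Lp R dX X pi p p1 A mA)).1.
have good := @good_of_V R dX dW X W Pi pi nu phi mphi phipos A mA hV hI.
have Ac0 := @closed_null R dX X Pi pi stat A mA Apos A2 good.
exact: (@full_of_null R dX X pi p p1 J HJ A (conj mA JA) Ac0).
Qed.
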